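(* Let $n\geq 5$, let $5\leq s\leq n$, and let $\alpha_2,\dots,\alpha_n\in\mathbb{C}$ with $\alpha_2=\cdots=\alpha_{s-1}=0$ and $\alpha_s\neq0$. Then the transposed Poisson algebra $\mathbf{TP}(\alpha_2,\dots,\alpha_n)$ is isomorphic to $\mathbf{TP}(\alpha_2',\dots,\alpha_n')$ where $\alpha_s'=1$, $\alpha_{2s-3}'=\alpha$ for some $\alpha\in\mathbb{C}$ (this entry present only when $2s-3\leq n$), and all other $\alpha_i'=0$.
   Context: $\mu_0^n$ is the complex commutative associative algebra with basis $\{e_1,\dots,e_n\}$ and $e_i\cdot e_j=e_{i+j}$ for $2\leq i+j\leq n$, other products zero. For $\alpha_2,\dots,\alpha_n\in\mathbb{C}$, $\mathbf{TP}(\alpha_2,\dots,\alpha_n)$ denotes $\mu_0^n$ with its associative product together with the bracket $[e_i,e_j]=(j-i)\sum_{t=i+j-1}^{n}\alpha_{t-i-j+3}e_t$ for $3\leq i+j\leq n+1$, other brackets of basis elements zero. Isomorphisms preserve both operations. *)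

(* Defs.v *)
(* The complex numbers are modelled as R[i] = complex R
   for an arbitrary R : realType (a complete archimedean ordered field,
   i.e. a copy of the real numbers), from mathcomp-real-closed's complex.v. *)
From HB Require Import structures.
From mathcomp Require Import all_boot all_order all_algebra.
From mathcomp Require Import complex.
From mathcomp Require Import reals.
Set Implicit Arguments. Unset Strict Implicit. Unset Printing Implicit Defensive.
Import Order.TTheory GRing.Theory Num.Theory.
Local Open Scope ring_scope.

(* Elements of the n-dimensional algebra are row vectors of coordinates in
   the basis e_1, ..., e_n; the basis vector e_k (1 <= k <= n) corresponds to
   the coordinate index k-1 : 'I_n. *)

(* Associative product of mu_0^n:  e_I * e_J = e_(I+J) if I+J <= n, else 0.
   In 0-based indices i = I-1, j = J-1, k = K-1: K = I+J  <->  k = i+j+1. *)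
Definition mu0_mul (C : pzRingType) (n : nat) (x y : 'rV[C]_n) : 'rV[C]_n :=
  \row_(k < n) \sum_(i < n) \sum_(j < n)
     (if (i + j + 1 == k)%N then x 0 i * y 0 j else 0).

(* Structure constants of the bracket of TP(alpha_2,...,alpha_n):
   [e_I, e_J] = (J - I) * sum_{T = I+J-1}^{n} alpha_(T-I-J+3) e_T
   for 3 <= I+J <= n+1, other brackets zero.
   Coefficient of e_T (0-based: i,j,t) is (j - i) * alpha (t - i - j + 2)
   when i + j + 1 <= t (this forces I+J <= n+1; the case I+J = 2 has J-I = 0).
   alpha : nat -> C, only the values alpha 2, ..., alpha n matter. *)
Definition tp_coef (C : pzRingType) (alpha : nat -> C) (i j t : nat) : C :=
  if (i + j + 1 <= t)%N then ((j%:R - i%:R) * alpha (t - i - j + 2)%N) else 0.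

Definition tp_bracket (C : pzRingType) (n : nat) (alpha : nat -> C)
    (x y : 'rV[C]_n) : 'rV[C]_n :=
  \row_(t < n) \sum_(i < n) \sum_(j < n) x 0 i * y 0 j * tp_coef alpha i j t.

Definition TP_isomorphic (C : comUnitRingType) (n : nat) (alpha beta : nat -> C) : Prop :=
  exists A : 'M[C]_n, A \in unitmx /\
    (forall x y : 'rV[C]_n, mu0_mul (x *m A) (y *m A) = mu0_mul x y *m A) /\
    (forall x y : 'rV[C]_n,
        tp_bracket beta (x *m A) (y *m A) = tp_bracket alpha x y *m A).
Arguments TP_isomorphic {C} n alpha beta.

(* Main.v *)
Require Import Defs.
From HB Require Import structures.
From mathcomp Require Import all_boot all_order all_algebra.
From mathcomp Require Import complex.
From mathcomp Require Import reals.
From mathcomp Require Import zify ring.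
Import Order.TTheory GRing.Theory Num.Theory.
Local Open Scope ring_scope.

Module Helpers.
Set Implicit Arguments. Unset Strict Implicit. Unset Printing Implicit Defensive.

Section DX.
Variable F : numFieldType.
Local Notation P := {poly F}.

Definition dX (N : nat) (f : P) := exists q, f = 'X^N * q.

Lemma dX0 (f : P) : dX 0 f.
Proof. by exists f; rewrite expr0 mul1r. Qed.

Lemma dX_zero N : dX N 0.
Proof. by exists 0; rewrite mulr0. Qed.

Lemma dXD N (f : P) g : dX N f -> dX N g -> dX N (f + g).
Proof. by move=> [a ->] [b ->]; exists (a + b); rewrite mulrDr. Qed.

Lemma dXN N (f : P) : dX N f -> dX N (- f).
Proof. by move=> [a ->]; exists (- a); rewrite mulrN. Qed.

Lemma dXB N (f : P) g : dX N f -> dX N g -> dX N (f - g).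
Proof. by move=> hf hg; apply: dXD => //; apply: dXN. Qed.

Lemma dXMl N (f : P) g : dX N f -> dX N (g * f).
Proof. by move=> [a ->]; exists (g * a); rewrite mulrCA. Qed.

Lemma dXMr N (f : P) g : dX N f -> dX N (f * g).
Proof. by move=> h; rewrite mulrC; apply: dXMl. Qed.

Lemma dXM a b (f : P) g : dX a f -> dX b g -> dX (a + b) (f * g).
Proof. by move=> [u ->] [v ->]; exists (u * v); rewrite exprD mulrACA. Qed.

Lemma dX_le a b (f : P) : (a <= b)%N -> dX b f -> dX a f.
Proof.
move=> hab [u ->]; exists ('X^(b - a) * u).
by rewrite mulrA -exprD subnKC.
Qed.

Lemma dX_coef N (f : P) k : dX N f -> (k < N)%N -> f`_k = 0.
Proof. by move=> [u ->] hk; rewrite coefXnM hk. Qed.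

Lemma coef_dX N (f : P) : (forall k, (k < N)%N -> f`_k = 0) -> dX N f.
Proof.
move=> h; exists (drop_poly N f).
have ht : take_poly N f = 0.
  by apply/polyP => k; rewrite coef_take_poly coef0; case: ifP => // /h.
by rewrite -{1}(poly_take_drop N f) ht add0r mulrC.
Qed.

Lemma dX1P (f : P) : f`_0 = 0 -> dX 1 f.
Proof. by move=> h; apply: coef_dX => k; rewrite ltnS leqn0 => /eqP ->. Qed.

Lemma dX1_horner (f : P) : f.[0] = 0 -> dX 1 f.
Proof. by rewrite horner_coef0; apply: dX1P. Qed.

Lemma dX_deriv a (f : P) : dX a.+1 f -> dX a f^`().
Proof.
move=> [u ->]; rewrite derivM derivXn /=.
exists (u *+ a.+1 + 'X * u^`()).
by rewrite mulrDr mulrnAl mulrnAr exprSr mulrA.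
Qed.

Lemma comp_Xn N (p : P) : 'X^N \Po p = p ^+ N.
Proof. by rewrite rmorphXn /= comp_polyX. Qed.

Lemma dX_comp N (f : P) (p : P) : dX N f -> dX 1 p -> dX N (f \Po p).
Proof.
move=> [u ->] [r hp]; rewrite comp_polyM comp_Xn {1}hp expr1.
by exists (r ^+ N * (u \Po p)); rewrite exprMn mulrA.
Qed.

Definition eqX N (f g : P) := dX N (f - g).

End DX.

Section Link.
Variable F : numFieldType.
Variable n : nat.
Local Notation P := {poly F}.

Lemma eqX_refl N (f : P) : eqX N f f.
Proof. by rewrite /eqX subrr; apply: dX_zero. Qed.

Lemma eqX_sym N (f g : P) : eqX N f g -> eqX N g f.
Proof. by rewrite /eqX => h; rewrite -opprB; apply: dXN. Qed.

Lemma eqX_trans N (f g h : P) : eqX N f g -> eqX N g h -> eqX N f h.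
Proof.
rewrite /eqX => h1 h2; have -> : f - h = (f - g) + (g - h) by ring.
exact: dXD.
Qed.

Lemma eqX_mul N (f1 f2 g1 g2 : P) : eqX N f1 f2 -> eqX N g1 g2 ->
  eqX N (f1 * g1) (f2 * g2).
Proof.
rewrite /eqX => h1 h2.
have -> : f1 * g1 - f2 * g2 = (f1 - f2) * g1 + f2 * (g1 - g2) by ring.
by apply: dXD; [apply: dXMr | apply: dXMl].
Qed.

Lemma eqX_comp N (f g p : P) : eqX N f g -> dX 1 p -> eqX N (f \Po p) (g \Po p).
Proof. by rewrite /eqX -comp_polyB; apply: dX_comp. Qed.

Definition toP (x : 'rV[F]_n) : P := \sum_(i < n) x 0 i *: 'X^(i.+1).
Definition fromP (f : P) : 'rV[F]_n := \row_(k < n) f`_k.+1.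

Lemma fromP_eqX (f g : P) : eqX n.+1 f g -> fromP f = fromP g.
Proof.
move=> h; apply/rowP => k; rewrite !mxE; apply/eqP; rewrite -subr_eq0 -coefB.
by apply/eqP; apply: (dX_coef h); rewrite ltnS ltn_ord.
Qed.

Lemma coef_toP0 x : (toP x)`_0 = 0.
Proof. by rewrite coef_sum big1 // => i _; rewrite coefZ coefXn /= mulr0. Qed.

Lemma coef_toPS x (k : 'I_n) : (toP x)`_k.+1 = x 0 k.
Proof.
rewrite coef_sum (bigD1 k) //= big1 ?addr0.
  by rewrite coefZ coefXn eqxx mulr1.
move=> i hi; rewrite coefZ coefXn eqSS.
have /negbTE -> : (k : nat) != i.
  by apply: contra hi => /eqP h; apply/eqP/val_inj.
by rewrite mulr0.
Qed.

Lemma toP_fromP (f : P) : f`_0 = 0 -> eqX n.+1 (toP (fromP f)) f.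
Proof.
move=> h0; apply: coef_dX => k hk; rewrite coefB.
case: k hk => [|k] hk; first by rewrite coef_toP0 h0 subrr.
rewrite ltnS in hk; have := coef_toPS (fromP f) (Ordinal hk); rewrite /= => ->.
by rewrite mxE subrr.
Qed.

Lemma mu0E x y : mu0_mul x y = fromP (toP x * toP y).
Proof.
apply/rowP => k; rewrite !mxE /toP mulr_suml coef_sum; apply: eq_bigr => i _.
rewrite mulr_sumr coef_sum; apply: eq_bigr => j _.
rewrite -scalerAl -scalerAr scalerA coefZ -exprD coefXn.
have -> : (k.+1 == i.+1 + j.+1) = (i + j + 1 == k)%N by apply/eqP/eqP; lia.
by case: eqP; rewrite ?mulr1 ?mulr0.
Qed.

Definition Wp (al : nat -> F) : P := \poly_(k < n) al (k + 2)%N.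
Definition Dp (f g : P) := f * g^`() - f^`() * g.

Lemma deriv_toP x : (toP x)^`() = \sum_(i < n) (x 0 i * i.+1%:R) *: 'X^i.
Proof.
rewrite raddf_sum; apply: eq_bigr => i _ /=.
by rewrite -mul_polyC derivM derivC mul0r add0r derivXn /= mul_polyC -scaler_nat scalerA.
Qed.

Lemma Dp_toP x y : Dp (toP x) (toP y) =
  \sum_(i < n) \sum_(j < n) (x 0 i * y 0 j * (j%:R - i%:R)) *: 'X^(i + j + 1).
Proof.
rewrite /Dp !deriv_toP /toP !mulr_suml -sumrB; apply: eq_bigr => i _.
rewrite !mulr_sumr -sumrB; apply: eq_bigr => j _.
rewrite -!scalerAl -!scalerAr !scalerA -!exprD.
have -> : (i.+1 + j = i + j + 1)%N by lia.
have -> : (i + j.+1 = i + j + 1)%N by lia.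
rewrite -scalerBl; congr (_ *: _).
rewrite -(addn1 i) -(addn1 j) !natrD; ring.
Qed.

Lemma bracketE (al : nat -> F) x y : al 2%N = 0 ->
  tp_bracket al x y = fromP (Wp al * Dp (toP x) (toP y)).
Proof.
move=> h2; apply/rowP => t; rewrite !mxE Dp_toP mulr_sumr coef_sum.
apply: eq_bigr => i _; rewrite mulr_sumr coef_sum; apply: eq_bigr => j _.
rewrite -scalerAr coefZ coefMXn coef_poly /tp_coef.
have ht := ltn_ord t.
case: (leqP (i + j + 1) t) => h.
  rewrite ifF; last by lia.
  rewrite ifT; last by lia.
  have -> : (t.+1 - (i + j + 1) + 2 = t - i - j + 2)%N by lia.
  by rewrite mulrA.
case: (ltnP t.+1 (i + j + 1)) => h'; first by rewrite !mulr0.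
rewrite ifT; last by lia.
have -> : (t.+1 - (i + j + 1) + 2 = 2)%N by lia.
by rewrite h2 !mulr0.
Qed.

Definition Amx (p : P) : 'M[F]_n := \matrix_(i < n, k < n) (p ^+ i.+1)`_k.+1.

Lemma mulA x (p : P) : x *m Amx p = fromP (toP x \Po p).
Proof.
apply/rowP => k; rewrite !mxE /toP linear_sum coef_sum; apply: eq_bigr => i _.
by rewrite mxE /= linearZ /= comp_Xn coefZ.
Qed.

Lemma Dp_eqX N (f1 f2 g1 g2 : P) : eqX N.+1 f1 f2 -> eqX N.+1 g1 g2 ->
  dX 1 f2 -> dX 1 g2 -> eqX N.+1 (Dp f1 g1) (Dp f2 g2).
Proof.
rewrite /eqX => hf hg hf2 hg2.
have -> : Dp f1 g1 - Dp f2 g2 = (f1 - f2) * g1^`() + f2 * (g1 - g2)^`()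
   - ((f1 - f2)^`() * g1 + f2^`() * (g1 - g2)).
  by rewrite /Dp !derivB; ring.
have hg1 : dX 1 g1.
  have -> : g1 = (g1 - g2) + g2 by ring.
  by apply: dXD => //; apply: (dX_le _ hg).
apply: dXB; apply: dXD.
- exact: dXMr.
- by rewrite -add1n; apply: dXM => //; apply: dX_deriv.
- by rewrite -addn1; apply: dXM => //; apply: dX_deriv.
- exact: dXMl.
Qed.

Lemma Dp_dX2 (f g : P) : dX 1 f -> dX 1 g -> dX 2 (Dp f g).
Proof.
move=> [f1 ->] [g1 ->]; exists (f1 * g1^`() - f1^`() * g1).
rewrite /Dp !derivM derivXn /= !expr1 expr0 expr2; ring.
Qed.

Lemma iso_of (al be : nat -> F) (r : P) : (0 < n)%N -> al 2%N = 0 -> be 2%N = 0 ->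
  r.[0] != 0 ->
  eqX n.-1 (Wp al \Po ('X * r)) (Wp be * ('X * r)^`()) -> TP_isomorphic n al be.
Proof.
move=> hn h2a h2b hr0 hW.
set p := 'X * r.
have hp1 : dX 1 p by exists r; rewrite expr1.
have hp0 : p.[0] = 0 by rewrite /p hornerM hornerX mul0r.
have c0 (f : P) : f`_0 = 0 -> (f \Po p)`_0 = 0.
  by move=> h; rewrite -horner_coef0 horner_comp hp0 horner_coef0.
exists (Amx p); split; [|split].
- rewrite unitmxE -det_tr det_trig.
    rewrite unitfE; apply/prodf_neq0 => i _; rewrite !mxE /p exprMn coefXnM ltnn subnn.
    by rewrite -horner_coef0 horner_exp expf_neq0.
  by apply/is_trig_mxP => i j hij; rewrite !mxE /p exprMn coefXnM ifT // ltnS.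
- move=> x y; rewrite !mulA !mu0E; apply: fromP_eqX.
  apply: (eqX_trans (g := (toP x \Po p) * (toP y \Po p))).
    by apply: eqX_mul; apply: toP_fromP; apply: c0; apply: coef_toP0.
  rewrite -comp_polyM; apply: eqX_comp => //; apply: eqX_sym; apply: toP_fromP.
  by rewrite coef0M coef_toP0 mul0r.
- move=> x y; rewrite !mulA !bracketE //; apply: fromP_eqX.
  set X := toP x; set Y := toP y.
  have hX : dX 1 X by apply: dX1P; apply: coef_toP0.
  have hY : dX 1 Y by apply: dX1P; apply: coef_toP0.
  apply: (eqX_trans (g := Wp be * Dp (X \Po p) (Y \Po p))).
    apply: eqX_mul; first exact: eqX_refl.
    apply: Dp_eqX; try (apply: toP_fromP; apply: c0; apply: coef_toP0);
      apply: dX1P; apply: c0; apply: coef_toP0.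
  apply: (eqX_trans (g := (Wp al * Dp X Y) \Po p)); last first.
    apply: eqX_sym; apply: eqX_comp => //; apply: toP_fromP.
    by rewrite coef0M (dX_coef (Dp_dX2 hX hY)) ?mulr0.
  have -> : Dp (X \Po p) (Y \Po p) = p^`() * (Dp X Y \Po p).
    by rewrite /Dp !deriv_comp comp_polyB !comp_polyM; ring.
  rewrite comp_polyM /eqX.
  have -> : Wp be * (p^`() * (Dp X Y \Po p)) - (Wp al \Po p) * (Dp X Y \Po p)
     = - ((Wp al \Po p) - Wp be * p^`()) * (Dp X Y \Po p) by ring.
  have -> : n.+1 = (n.-1 + 2)%N by lia.
  apply: dXM; first exact: dXN.
  by apply: dX_comp => //; apply: Dp_dX2.
Qed.

End Link.

Section Exist.
Variable F : numFieldType.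
Local Notation P := {poly F}.

Lemma root0 (q : P) : q.[0] = 0 -> exists q', q = 'X * q'.
Proof.
move=> h; have /factor_theorem [q' ->] : root q 0 by apply/rootP.
by exists q'; rewrite subr0 mulrC.
Qed.

Lemma comp_diff (V q1 q2 : P) : exists T, (V \Po q1) - (V \Po q2) = (q1 - q2) * T.
Proof.
elim/poly_ind: V => [|V d [T hT]].
  by exists 0; rewrite !comp_poly0 subrr mulr0.
exists (T * q1 + (V \Po q2)); rewrite !comp_poly_MXaddC.
have e : V \Po q1 = (V \Po q2) + (q1 - q2) * T by rewrite -hT addrC subrK.
rewrite e; ring.
Qed.

Variables (m : nat) (U : P) (c : F).
Hypothesis hm : (2 <= m)%N.
Hypothesis hc : c ^+ m.-1 * U.[0] = 1.

Definition Ep (r : P) (a : F) : P :=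
  r ^+ m * (U \Po ('X * r)) - (1 + a%:P * 'X^(m.-1)) * (r + 'X * r^`()).

Lemma hc0 : c != 0.
Proof.
apply/eqP => c0; move: hc; rewrite c0 expr0n.
have -> : (m.-1 == 0)%N = false by lia.
by rewrite mul0r => /eqP; rewrite eq_sym oner_eq0.
Qed.

Lemma Ep_ex k : (0 < k)%N -> exists (r : P) (a : F) (e : P), r.[0] = c /\ Ep r a = 'X^k * e.
Proof.
elim: k => // k IH _; case: k IH => [|k] IH.
  have : (Ep c%:P 0).[0] = 0.
    rewrite /Ep !hornerE horner_comp !hornerE.
    by rewrite -(prednK (ltnW hm)) exprS -mulrA /= hc mulr1 subrr.
  move=> /root0 [e he]; exists c%:P, 0, e; split; first by rewrite hornerC.
  by rewrite expr1.
have [r [a [e [hr0 hE]]]] := IH isT.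
case: (eqVneq k.+1 m.-1) => hk.
  set d := e.[0] / c.
  set e' := e - d%:P * (r + 'X * r^`()).
  have : e'.[0] = 0.
    by rewrite /e' !hornerE hr0 /d divfK ?subrr // hc0.
  move=> /root0 [e3 he3]; exists r, (a + d), e3; split => //.
  rewrite exprSr -mulrA -he3.
  apply/eqP; rewrite -subr_eq0; apply/eqP.
  have -> : Ep r (a + d) - 'X^(k.+1) * e' = Ep r a - 'X^(k.+1) * e.
    by rewrite /Ep /e' polyCD -hk; ring.
  by rewrite hE subrr.
have hkm : (k.+2 != m)%N.
  by apply/eqP => h; rewrite -h /= eqxx in hk.
have hden : ((k.+2)%:R - m%:R : F) != 0 by rewrite subr_eq0 eqr_nat.
set b := e.[0] / ((k.+2)%:R - m%:R).
have hb : b * ((k.+2)%:R - m%:R) = e.[0] by rewrite /b divfK.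
clearbody b.
set r2 := r + b%:P * 'X^(k.+1).
have [T hT] := comp_diff U ('X * r2) ('X * r).
have hS := subrXX r2 r m.
set S := \sum_(i < m) _ in hS.
have e1 : r2 ^+ m = r ^+ m + (r2 - r) * S by rewrite -hS addrC subrK.
have e2 : U \Po ('X * r2) = (U \Po ('X * r)) + ('X * r2 - 'X * r) * T.
  by rewrite -hT addrC subrK.
have e3 : r2^`() = r^`() + b%:P * ('X^k *+ k.+1).
  by rewrite /r2 derivD derivM derivC mul0r add0r derivXn.
set Q := b%:P * S * (U \Po ('X * r2)) + 'X * r ^+ m * b%:P * T
   - (1 + a%:P * 'X^(m.-1)) * (b * (k.+2)%:R)%:P.
have hQ : Ep r2 a = 'X^(k.+1) * (e + Q).
  apply/eqP; rewrite -subr_eq0; apply/eqP.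
  have -> : Ep r2 a - 'X^(k.+1) * (e + Q) = Ep r a - 'X^(k.+1) * e.
    rewrite /Ep /Q e1 e2 e3 /r2 polyCM polyC_natr -mulr_natr !exprS !mulrS.
    ring.
  by rewrite hE subrr.
have hr2 : r2.[0] = c by rewrite /r2 !hornerE hr0 expr0n /= mulr0 addr0.
have hS0 : S.[0] = m%:R * c ^+ m.-1.
  rewrite /S horner_sum (eq_bigr (fun _ => c ^+ m.-1)).
    by rewrite sumr_const card_ord mulr_natl.
  move=> i _; rewrite hornerM !horner_exp hr2 hr0 -exprD subnK //.
  have := ltn_ord i; lia.
have : (e + Q).[0] = 0.
  rewrite /Q !(hornerD, hornerN, hornerM, hornerC, hornerX, hornerXn) horner_comp !(hornerM, hornerX) mul0r hS0 expr0n.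
  have -> : (m.-1 == 0)%N = false by lia.
  rewrite mulr0 addr0 mul1r !mul0r addr0 -!mulrA hc mulr1 -hb; ring.
move=> /root0 [e4 he4]; exists r2, a, e4; split => //.
by rewrite hQ he4 mulrA -exprSr.
Qed.

End Exist.
End Helpers.
Import Helpers.

Theorem mainTheorem10 (R : realType) (n s : nat) (alpha : nat -> R[i])
    (hn : (5 <= n)%N) (hs5 : (5 <= s)%N) (hsn : (s <= n)%N)
    (hzero : forall k : nat, (2 <= k)%N -> (k < s)%N -> alpha k = 0)
    (hs : alpha s != 0) :
  exists a : R[i],
    TP_isomorphic n alpha
      (fun k : nat => if k == s then 1
                      else if (k == (2 * s - 3)%N) && (2 * s - 3 <= n)%N then a
                      else 0).
Proof.
have [m hsm] : exists m, s = (m + 2)%N by exists (s - 2)%N; lia.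
subst s.
have hm2 : (2 <= m)%N by lia.
set U : {poly R[i]} := \poly_(k < n - m) alpha (k + m + 2)%N.
set c : R[i] := (m.-1).-root (alpha (m + 2)%N)^-1.
have hc : c ^+ m.-1 * U.[0] = 1.
  rewrite /c rootCK; last by lia.
  by rewrite horner_coef0 coef_poly ifT ?add0n ?mulVf //; lia.
have [r [a [e [hr0 hE]]]] := Ep_ex hm2 hc (k := (n.-1 - m)%N) ltac:(lia).
exists a.
set beta := (fun k : nat => _).
apply: (iso_of (r := r)).
- lia.
- by apply: hzero; lia.
- rewrite /beta.
  have -> : (2 == m + 2)%N = false by apply/negbTE/eqP; lia.
  have -> : (2 == 2 * (m + 2) - 3)%N = false by apply/negbTE/eqP; lia.
  by [].
- by rewrite hr0; apply: (hc0 hm2 hc).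
set p := 'X * r.
have hWa : Wp n alpha = 'X^m * U.
  apply/polyP => k; rewrite coefXnM !coef_poly.
  case: (ltnP k m) => hkm.
    by case: ifP => // _; apply: hzero; lia.
  have -> : (k - m < n - m)%N = (k < n)%N by apply/idP/idP; lia.
  by have -> : (k - m + m + 2 = k + 2)%N by lia.
set V : {poly R[i]} := 'X^m * (1 + a%:P * 'X^(m.-1)).
have hWb : eqX n.-1 (Wp n beta) V.
  apply: coef_dX => k hk.
  rewrite coefB coef_poly /V mulrDr mulr1 mulrCA -exprD coefD coefCM !coefXn.
  rewrite ifT; last by lia.
  rewrite /beta.
  case: (eqVneq k m) => [->|hkm].
    rewrite eqxx.
    have -> : (m == m + m.-1)%N = false by apply/negbTE/eqP; lia.
    by rewrite mulr0 addr0 subrr.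
  have -> : (k + 2 == m + 2)%N = false by apply/negbTE/eqP; lia.
  case: (eqVneq k (m + m.-1)%N) => [hkE|hk2]; first rewrite hkE.
    have -> : (m + m.-1 + 2 == 2 * (m + 2) - 3)%N = true by apply/eqP; lia.
    have -> : (2 * (m + 2) - 3 <= n)%N = true by lia.
    by rewrite /= mulr1 add0r subrr.
  have -> : (k + 2 == 2 * (m + 2) - 3)%N = false by apply/negbTE/eqP; lia.
  by rewrite /= mulr0 addr0 subrr.
rewrite /eqX hWa comp_polyM comp_Xn.
have hp' : p^`() = r + 'X * r^`() by rewrite /p derivM derivX mul1r.
have -> : p ^+ m * (U \Po p) - Wp n beta * p^`() =
    'X^m * Ep m U r a - (Wp n beta - V) * p^`().
  by rewrite /Ep /V hp' /p exprMn; ring.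
apply: dXB; last by apply: dXMr.
rewrite hE mulrA -exprD.
have -> : (m + (n.-1 - m) = n.-1)%N by lia.
by exists e.
Qed.
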